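(* Let $k\ge1$ and let $\tilde a>0$, $b>0$. Suppose $\mathbf{x}=(x_1,x_2,x_3)\in(0,\infty)^3$ solves $$x_1=\tilde a\frac{b x_3^k+1}{x_3^k+b},\qquad x_2=\tilde a\frac{(b x_2^k+1)x_3^k}{(x_3^k+b)x_1^k},\qquad x_3=\tilde a\frac{(b x_3^k+1)x_1^k}{(x_2^k+b)x_3^k}.$$ Then $x_1=x_2=x_3$ if and only if at least one of $x_1=x_2$, $x_1=x_3$, $x_2=x_3$ holds.
   Context: In the paper, $\tilde a=e^{2\beta J/k}$ and $b=e^{2\beta J_p}$. The system describes translation-invariant boundary fields for the Ising–Vannimenus model on the Cayley tree of order $k$. *)

(* Defs.v *)
From mathcomp Require Import all_boot all_order all_algebra.
Set Implicit Arguments. Unset Strict Implicit. Unset Printing Implicit Defensive.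
Import Order.TTheory GRing.Theory Num.Theory.
Local Open Scope ring_scope.

(* The fixed-point system for translation-invariant boundary fields
   (x1,x2,x3) of the Ising–Vannimenus model on the Cayley tree of order k,
   with a = \tilde a = exp(2 beta J / k) and b = exp(2 beta J_p). *)
Definition IV_system (R : realFieldType) (k : nat) (a b x1 x2 x3 : R) : Prop :=
  [/\ x1 = a * ((b * x3 ^+ k + 1) / (x3 ^+ k + b)),
      x2 = a * (((b * x2 ^+ k + 1) * x3 ^+ k) / ((x3 ^+ k + b) * x1 ^+ k))
    & x3 = a * (((b * x3 ^+ k + 1) * x1 ^+ k) / ((x2 ^+ k + b) * x3 ^+ k))].

(* Main.v *)
Require Import Defs.
From mathcomp Require Import all_boot all_order all_algebra.
From mathcomp Require Import ring lra.
Import Order.TTheory GRing.Theory Num.Theory.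
Local Open Scope ring_scope.

Lemma powinj (R : realFieldType) (k : nat) (x y : R) :
  (1 <= k)%N -> 0 < x -> 0 < y -> x ^+ k = y ^+ k -> x = y.
Proof.
move=> hk hx hy /eqP; rewrite eqrXn2 ?ltW //; by move/eqP.
Qed.

Theorem proposition4p1 (R : realFieldType) (k : nat) (a b x1 x2 x3 : R) :
  (1 <= k)%N -> 0 < a -> 0 < b ->
  0 < x1 -> 0 < x2 -> 0 < x3 ->
  IV_system k a b x1 x2 x3 ->
  ((x1 = x2 /\ x2 = x3) <-> (x1 = x2 \/ x1 = x3 \/ x2 = x3)).
Proof.
move=> hk ha hb h1 h2 h3 [E1 E2 E3]; split.
  by move=> [-> ->]; left.
have p1 : 0 < x1 ^+ k by exact: exprn_gt0.
have p2 : 0 < x2 ^+ k by exact: exprn_gt0.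
have p3 : 0 < x3 ^+ k by exact: exprn_gt0.
have inj := @powinj R k _ _ hk.
have an : a != 0 by rewrite gt_eqF.
case=> [e12|[e13|e23]].
-
  rewrite -e12 in E2 *; split => //.
  apply: inj => //.
  move: E1 E2 p1 p3; set y1 := x1 ^+ k; set y3 := x3 ^+ k => E1 E2 p1 p3.
  apply/eqP; rewrite -subr_eq0; apply/eqP.
  have n1 : y1 != 0 by rewrite gt_eqF.
  have n3 : y3 + b != 0 by rewrite gt_eqF // ltr_wpDl // ltW.
  have -> : y1 - y3 = (y3 + b) * y1 / a *
     (a * ((b * y3 + 1) / (y3 + b)) - a * (((b * y1 + 1) * y3) / ((y3 + b) * y1))).
    by field; rewrite an n1 n3.
  by rewrite -E1 -E2 subrr mulr0.
-
  rewrite -e13 in E1 E3 *.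
  suff e : x1 = x2 by split.
  apply: inj => //.
  move: E1 E3 p1 p2; set y1 := x1 ^+ k; set y2 := x2 ^+ k => E1 E3 p1 p2.
  apply/eqP; rewrite eq_sym -subr_eq0; apply/eqP.
  have n1 : y1 != 0 by rewrite gt_eqF.
  have n2 : y2 + b != 0 by rewrite gt_eqF // ltr_wpDl // ltW.
  have n1b : y1 + b != 0 by rewrite gt_eqF // ltr_wpDl // ltW.
  have nb : b * y1 + 1 != 0 by rewrite gt_eqF // ltr_wpDl // mulr_ge0 // ltW.
  have -> : y2 - y1 = (y1 + b) * (y2 + b) / (a * (b * y1 + 1)) *
     (a * ((b * y1 + 1) / (y1 + b)) - a * (((b * y1 + 1) * y1) / ((y2 + b) * y1))).
    by field; rewrite an n1 n2 n1b nb.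
  by rewrite -E1 -E3 subrr mulr0.
-
  rewrite -e23 in E1 E2 E3 *.
  suff e : x1 = x2 by split.
  apply: inj => //.
  move: E1 E2 E3 p1 p2; set y1 := x1 ^+ k; set y2 := x2 ^+ k => E1 E2 E3 p1 p2.
  have n1 : y1 != 0 by rewrite gt_eqF.
  have n2' : y2 != 0 by rewrite gt_eqF.
  have n2 : y2 + b != 0 by rewrite gt_eqF // ltr_wpDl // ltW.
  have nb : b * y2 + 1 != 0 by rewrite gt_eqF // ltr_wpDl // mulr_ge0 // ltW.
  have H : (y2 - y1) * (y2 + y1) = 0.
    have -> : (y2 - y1) * (y2 + y1) = (y2 + b) * y1 * y2 / (a * (b * y2 + 1)) *
     (a * (((b * y2 + 1) * y2) / ((y2 + b) * y1)) - a * (((b * y2 + 1) * y1) / ((y2 + b) * y2))).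
      by field; rewrite an n1 n2 n2' nb.
    by rewrite -E2 -E3 subrr mulr0.
  move/eqP: H; rewrite mulf_eq0 => /orP [/eqP H|H].
    by apply/eqP; rewrite eq_sym -subr_eq0 H.
  by move: H; rewrite gt_eqF // addr_gt0.
Qed.
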